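(* For every $(\varepsilon,\delta)\in(0,1)\times[0,\delta_0]$, $$\mathcal R^\ast(\varepsilon,\delta|p_{X_1X_2},p_{K_1K_2})\subseteq\mathcal R^{(\rm out)}(p_{X_1X_2},p_{K_1K_2}),$$ where $\mathcal R^{(\rm out)}(p_{X_1X_2},p_{K_1K_2}):=\mathcal R_{\rm sw}(p_{X_1X_2})$ if $\mathcal R_{\rm key}(p_{K_1K_2})\cap\mathcal R_{\rm sw}(p_{X_1X_2})\neq\emptyset$, and $:=\emptyset$ otherwise.
   Context: All logarithms are base 2. $\mathcal X_1,\mathcal X_2$ are finite fields. $(X_1,X_2)$ has joint pmf $p_{X_1X_2}$ on $\mathcal X_1\times\mathcal X_2$ and $(K_1,K_2)$ has joint pmf $p_{K_1K_2}$ on $\mathcal X_1\times\mathcal X_2$. For block length $n$, $(\mathbf X_1,\mathbf X_2)$ is i.i.d. with law $p^n_{X_1X_2}$ (source), $(\mathbf K_1,\mathbf K_2)$ is i.i.d. with law $p^n_{K_1K_2}$ (keys), and the keys are independent of the sources. A distributed source encryption system at block length $n$ consists of finite sets $\mathcal C_i^{(n)}$, encryption maps $\Phi_i^{(n)}:\mathcal X_i^n\times\mathcal X_i^n\to\mathcal C_i^{(n)}$ (key, plaintext) and a decryption map $\Psi^{(n)}:\mathcal X_1^n\times\mathcal X_2^n\times\mathcal C_1^{(n)}\times\mathcal C_2^{(n)}\to\mathcal X_1^n\times\mathcal X_2^n$, such that there exist maps $\phi_i^{(n)}:\mathcal X_i^n\to\mathcal M_i^{(n)}$ (finite $\mathcal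 M_i^{(n)}$) and $\psi^{(n)}$ with $\Psi^{(n)}(\mathbf k_1,\mathbf k_2,\Phi_1^{(n)}(\mathbf k_1,\mathbf x_1),\Phi_2^{(n)}(\mathbf k_2,\mathbf x_2))=\psi^{(n)}(\phi_1^{(n)}(\mathbf x_1),\phi_2^{(n)}(\mathbf x_2))$ for all keys and plaintexts. Ciphertexts: $C_i^{(n)}=\Phi_i^{(n)}(\mathbf K_i,\mathbf X_i)$. Correct decoding set $\mathcal D^{(n)}:=\{(\mathbf x_1,\mathbf x_2):\psi^{(n)}(\phi_1^{(n)}(\mathbf x_1),\phi_2^{(n)}(\mathbf x_2))=(\mathbf x_1,\mathbf x_2)\}$; error probability $p_{\rm e}:=\Pr[(\mathbf X_1,\mathbf X_2)\notin\mathcal D^{(n)}]$. Fix a constant $\delta_0>0$. For $(\varepsilon,\delta)\in(0,1)\times[0,\delta_0]$, $(R_1,R_2)$ is an $(\varepsilon,\delta)$-reliable and secure rate pair if there is a sequence of systems $\{(\Phi_1^{(n)},\Phi_2^{(n)},\Psi^{(n)})\}_{n\ge1}$ such that for every $\gamma>0$ there is $n_0$ with, for all $n\ge n_0$: $\frac1n\log|\mathcal C_i^{(n)}|\le R_i+\gamma$ ($i=1,2$), $p_{\rm e}\le\varepsilon$, and $I(C_1^{(n)}C_2^{(n)};\mathbf X_1\mathbf X_2)\le\delta$. $\mathcal R^\ast(\varepsilon,\delta|p_{X_1X_2},p_{K_1K_2})$ is the set of such pairs. $\mathcal R_{\rm sw}(p_{X_1X_2}):=\{(R_1,R_2):R_1\ge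 H(X_1|X_2),R_2\ge H(X_2|X_1),R_1+R_2\ge H(X_1X_2)\}$, $\mathcal R_{\rm key}(p_{K_1K_2}):=\{(R_1,R_2):R_1\le H(K_1),R_2\le H(K_2),R_1+R_2\le H(K_1K_2)\}$. *)

(* Defs.v *)
From HB Require Import structures.
From mathcomp Require Import all_boot all_order all_algebra.
From mathcomp Require Import all_classical all_reals all_analysis.
Set Implicit Arguments. Unset Strict Implicit. Unset Printing Implicit Defensive.
Import Order.TTheory GRing.Theory Num.Theory.
Local Open Scope ring_scope.
Local Open Scope classical_set_scope.

Section Defs.
Variable R : realType.

Definition log2 (x : R) : R := ln x / ln 2.

Definition is_pmf (T : finType) (p : T -> R) : Prop :=
  (forall x, 0 <= p x) /\ \sum_(x : T) p x = 1.

(* Shannon entropy (0 log 0 = 0 automatically since 0 * _ = 0) *)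
Definition entropy (T : finType) (p : T -> R) : R :=
  - \sum_(x : T) p x * log2 (p x).

Definition marg1 (A B : finType) (p : A * B -> R) (a : A) : R :=
  \sum_(b : B) p (a, b).
Definition marg2 (A B : finType) (p : A * B -> R) (b : B) : R :=
  \sum_(a : A) p (a, b).

Definition H1 (A B : finType) (p : A * B -> R) := entropy (marg1 p).
Definition H2 (A B : finType) (p : A * B -> R) := entropy (marg2 p).
Definition H12 (A B : finType) (p : A * B -> R) := entropy p.
Definition H1given2 (A B : finType) (p : A * B -> R) := H12 p - H2 p.
Definition H2given1 (A B : finType) (p : A * B -> R) := H12 p - H1 p.

Definition mutual_info (U V : finType) (P : U * V -> R) : R :=
  \sum_(uv : U * V) P uv * log2 (P uv / (marg1 P uv.1 * marg2 P uv.2)).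

Definition seqn (F : finType) (n : nat) := {ffun 'I_n -> F}.

Definition iid_pair (A B : finType) (p : A * B -> R) (n : nat)
  (xy : seqn A n * seqn B n) : R :=
  \prod_(i < n) p (xy.1 i, xy.2 i).

End Defs.

(* A distributed source encryption system at block length n.  The maps
   phi_i, psi whose existence is required are recorded as part of the data. *)
Unset Implicit Arguments.
Record system (F1 F2 : finType) (n : nat) := System {
  C1 : finType;
  C2 : finType;
  Phi1 : seqn F1 n -> seqn F1 n -> C1;   (* (key, plaintext) *)
  Phi2 : seqn F2 n -> seqn F2 n -> C2;
  Psi : seqn F1 n -> seqn F2 n -> C1 -> C2 -> seqn F1 n * seqn F2 n;
  M1 : finType;
  M2 : finType;
  phi1 : seqn F1 n -> M1;
  phi2 : seqn F2 n -> M2;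
  psi : M1 -> M2 -> seqn F1 n * seqn F2 n;
  sys_ok : forall k1 k2 x1 x2,
    Psi k1 k2 (Phi1 k1 x1) (Phi2 k2 x2) = psi (phi1 x1) (phi2 x2)
}.
Arguments C1 {F1 F2 n}. Arguments C2 {F1 F2 n}.
Arguments Phi1 {F1 F2 n}. Arguments Phi2 {F1 F2 n}. Arguments Psi {F1 F2 n}.
Arguments M1 {F1 F2 n}. Arguments M2 {F1 F2 n}.
Arguments phi1 {F1 F2 n}. Arguments phi2 {F1 F2 n}. Arguments psi {F1 F2 n}.
Set Implicit Arguments.

Section Perf.
Variable R : realType.
Variables (F1 F2 : finType).
Variables (pX pK : F1 * F2 -> R).

Definition correct (n : nat) (S : system F1 F2 n) (x : seqn F1 n * seqn F2 n) : bool :=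
  psi S (phi1 S x.1) (phi2 S x.2) == x.

Definition err_prob (n : nat) (S : system F1 F2 n) : R :=
  \sum_(x : seqn F1 n * seqn F2 n | ~~ correct S x) iid_pair pX x.

Definition joint_CX (n : nat) (S : system F1 F2 n)
  (cx : (C1 S * C2 S) * (seqn F1 n * seqn F2 n)) : R :=
  \sum_(k : seqn F1 n * seqn F2 n |
          (Phi1 S k.1 cx.2.1, Phi2 S k.2 cx.2.2) == cx.1)
     iid_pair pK k * iid_pair pX cx.2.

Definition leakage (n : nat) (S : system F1 F2 n) : R :=
  mutual_info (@joint_CX n S).

Definition Rstar (eps delta : R) : set (R * R) :=
  [set r | exists sys : forall n : nat, system F1 F2 n,
     forall gamma : R, 0 < gamma ->
     exists n0 : nat, forall n : nat, (n0 <= n)%N -> (0 < n)%N ->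
       [/\ log2 (#|C1 (sys n)|%:R) / n%:R <= r.1 + gamma,
           log2 (#|C2 (sys n)|%:R) / n%:R <= r.2 + gamma,
           err_prob (sys n) <= eps &
           leakage (sys n) <= delta]].

Definition Rsw : set (R * R) :=
  [set r | [/\ r.1 >= H1given2 pX, r.2 >= H2given1 pX & r.1 + r.2 >= H12 pX]].

Definition Rkey : set (R * R) :=
  [set r | [/\ r.1 <= H1 pK, r.2 <= H2 pK & r.1 + r.2 <= H12 pK]].

Definition Rout : set (R * R) :=
  if pselect (Rkey `&` Rsw !=set0) then Rsw else set0.

End Perf.

(* Main.v *)
Require Import Defs.
From HB Require Import structures.
From mathcomp Require Import all_boot all_order all_algebra.
From mathcomp Require Import all_classical all_reals all_analysis.
From mathcomp Require Import ring lra.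
Import Order.TTheory GRing.Theory Num.Theory.
Local Open Scope ring_scope.
Notation seqn := Defs.seqn.
Set Implicit Arguments. Unset Strict Implicit. Unset Printing Implicit Defensive.

Section Logs.
Variable R : realType.

Lemma ln2_gt0 : 0 < ln (2 : R).
Proof. by apply: ln_gt0; rewrite ltr1n. Qed.

Lemma log2M (x y : R) : 0 < x -> 0 < y -> log2 (x * y) = log2 x + log2 y.
Proof. by move=> hx hy; rewrite /log2 lnM ?posrE // mulrDl. Qed.

Lemma log2_div (x y : R) : 0 < x -> 0 < y -> log2 (x / y) = log2 x - log2 y.
Proof. by move=> hx hy; rewrite /log2 ln_div ?posrE // mulrBl. Qed.

Lemma ler_log2 (x y : R) : 0 < x -> 0 < y -> (log2 x <= log2 y) = (x <= y).
Proof.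
move=> hx hy; rewrite /log2 ler_pM2r ?invr_gt0 ?ln2_gt0 //.
by rewrite ler_ln ?posrE.
Qed.

Lemma ltr_log2 (x y : R) : 0 < x -> 0 < y -> (log2 x < log2 y) = (x < y).
Proof.
move=> hx hy; rewrite /log2 ltr_pM2r ?invr_gt0 ?ln2_gt0 //.
by rewrite ltr_ln ?posrE.
Qed.

Definition pw2 (y : R) : R := expR (y * ln 2).

Lemma pw2_gt0 y : 0 < pw2 y. Proof. exact: expR_gt0. Qed.

Lemma log2_pw2 y : log2 (pw2 y) = y.
Proof.
by rewrite /log2 /pw2 expRK mulrK // unitfE gt_eqF // ln2_gt0.
Qed.

Lemma pw2_log2 x : 0 < x -> pw2 (log2 x) = x.
Proof.
move=> hx; rewrite /pw2 /log2 divrK ?unitfE ?gt_eqF ?ln2_gt0 //.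
by rewrite lnK ?posrE.
Qed.

Lemma log2_le_pw2 x y : 0 < x -> (log2 x <= y) = (x <= pw2 y).
Proof. by move=> hx; rewrite -(@ler_log2 x (pw2 y) hx (pw2_gt0 _)) log2_pw2. Qed.

Lemma log2_ge_pw2 x y : 0 < x -> (y <= log2 x) = (pw2 y <= x).
Proof. by move=> hx; rewrite -(@ler_log2 (pw2 y) x (pw2_gt0 _) hx) log2_pw2. Qed.

Lemma log2_ge (z : R) : 0 < z -> (1 - z^-1) / ln 2 <= log2 z.
Proof.
move=> hz; rewrite /log2 ler_pM2r ?invr_gt0 ?ln2_gt0 //.
have h1 : -1 < z^-1 - 1 by rewrite -subr_gt0 opprK subrK invr_gt0.
have := le_ln1Dx h1; rewrite addrC subrK lnV ?posrE // => h.
lra.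
Qed.

Lemma xlog2x_ge (a : R) : 0 < a -> - (ln 2)^-1 <= a * log2 a.
Proof.
move=> ha; have h := @log2_ge a ha.
have l2 := @ln2_gt0.
have h2 : a * ((1 - a^-1) / ln 2) <= a * log2 a by rewrite ler_wpM2l // ltW.
have e : a * ((1 - a^-1) / ln 2) = a / ln 2 - (ln 2)^-1.
  by field; rewrite !gt_eqF.
have h3 : 0 <= a / ln 2 by rewrite divr_ge0 // ltW // ln2_gt0.
lra.
Qed.

End Logs.
Arguments pw2 {R} y.
Section Prod.
Variable R : realType.

Lemma sum_ffun_prod (T : finType) n (F : 'I_n -> T -> R) :
  \sum_(f : seqn T n) \prod_i F i (f i) = \prod_i \sum_a F i a.
Proof. by rewrite bigA_distr_bigA. Qed.

Lemma sum_pair_prod (A B : finType) n (F : 'I_n -> A * B -> R) :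
  \sum_(x : seqn A n * seqn B n) \prod_i F i (x.1 i, x.2 i) =
  \prod_i \sum_l F i l.
Proof.
rewrite -(pair_bigA _ (fun (x1 : seqn A n) (x2 : seqn B n) =>
   \prod_i F i (x1 i, x2 i))) /=.
under eq_bigr => x1 _.
  rewrite -(bigA_distr_bigA (fun i b => F i (x1 i, b))).
over.
rewrite /= -(bigA_distr_bigA (fun i a => \sum_b F i (a, b))).
apply: eq_bigr => i _; rewrite (pair_bigA _ (fun a b => F i (a, b))) /=.
by apply: eq_bigr => -[a b].
Qed.

Lemma prod_if1 n (i : 'I_n) (a : 'I_n -> R) :
  \prod_(k < n) (if k == i then a k else 1) = a i.
Proof.
rewrite (bigD1 i) //= eqxx big1 ?mulr1 // => k /negbTE -> //.
Qed.

Lemma sum_if1 n (i : 'I_n) (a : R) :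
  \sum_(k < n) (if i == k then a else 0) = a.
Proof.
rewrite (bigD1 i) //= eqxx big1 ?addr0 // => k; rewrite eq_sym => /negbTE -> //.
Qed.

Lemma sum_le_subset (I : finType) (P Q : pred I) (F : I -> R) :
  (forall i, P i -> Q i) -> (forall i, Q i -> 0 <= F i) ->
  \sum_(i | P i) F i <= \sum_(i | Q i) F i.
Proof.
move=> PQ F0; rewrite [X in _ <= X](bigID P) /=.
rewrite (eq_bigl P); last by move=> i; case: (boolP (P i)) => h; rewrite ?andbT ?andbF // PQ.
by rewrite lerDl sumr_ge0 // => i /andP [] /F0.
Qed.

Definition Sg (A B : finType) (g : A * B -> R) n (x : seqn A n * seqn B n) :=
  \sum_i g (x.1 i, x.2 i).
Arguments Sg {A B} g {n} x.

Lemma iid_sum1 (A B : finType) (p : A * B -> R) n :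
  is_pmf p -> \sum_x iid_pair p (n:=n) x = 1.
Proof.
case=> _ h1; rewrite /iid_pair (@sum_pair_prod _ _ n (fun i => p)).
by rewrite h1 prodr_const expr1n.
Qed.

Lemma iid_ge0 (A B : finType) (p : A * B -> R) n x :
  is_pmf p -> 0 <= iid_pair p (n:=n) x.
Proof. by case=> h0 _; rewrite /iid_pair prodr_ge0. Qed.

Lemma var_sum (A B : finType) (p : A * B -> R) (g : A * B -> R) n :
  is_pmf p ->
  \sum_x iid_pair p (n:=n) x *
     (Sg g x - n%:R * (\sum_l p l * g l)) ^+ 2 =
  n%:R * \sum_l p l * (g l - \sum_l p l * g l) ^+ 2.
Proof.
move=> hp; set mu := \sum_l p l * g l.
set Y := fun l => g l - mu.
have EY : \sum_l p l * Y l = 0.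
  rewrite /Y; under eq_bigr => l _ do rewrite mulrBr.
  by rewrite sumrB -/mu -mulr_suml (proj2 hp) mul1r subrr.
have E1 : \sum_l p l = 1 by case: hp.
have key : forall i j : 'I_n,
  \sum_x iid_pair p x * (Y (x.1 i, x.2 i) * Y (x.1 j, x.2 j)) =
  if i == j then \sum_l p l * Y l ^+ 2 else 0.
  move=> i j.
  have E : forall x : seqn A n * seqn B n,
     iid_pair p x * (Y (x.1 i, x.2 i) * Y (x.1 j, x.2 j)) =
     \prod_k (fun k l => p l * ((if k == i then Y l else 1) *
                               (if k == j then Y l else 1))) k (x.1 k, x.2 k).
    move=> x /=; rewrite big_split /= big_split /=.
    by rewrite (@prod_if1 n i (fun k => Y (x.1 k, x.2 k)))
               (@prod_if1 n j (fun k => Y (x.1 k, x.2 k))).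
  under eq_bigr => x _ do rewrite E.
  rewrite (@sum_pair_prod _ _ n (fun k l => p l * ((if k == i then Y l else 1) * (if k == j then Y l else 1)))) (bigD1 i) //= eqxx.
  case: (eqVneq i j) => [<-|nij].
    rewrite [X in _ * X]big1 ?mulr1.
      by under [RHS]eq_bigr => l _ do rewrite expr2.
    move=> k /negbTE ->; under eq_bigr do rewrite !mulr1.
    exact: E1.
  under eq_bigr do rewrite mulr1.
  by rewrite EY mul0r.
have E2 : forall x : seqn A n * seqn B n,
    Sg g x - n%:R * mu = \sum_i Y (x.1 i, x.2 i).
  move=> x; rewrite /Sg /Y sumrB sumr_const card_ord.
  by rewrite mulr_natl.
under eq_bigr => x _.
  rewrite E2 expr2 mulr_suml mulr_sumr.
  under eq_bigr => i _ do rewrite mulr_sumr mulr_sumr.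
over.
rewrite /= exchange_big /=.
under eq_bigr => i _ do rewrite exchange_big /=.
under eq_bigr => i _ do under eq_bigr => j _ do rewrite key.
under eq_bigr => i _ do rewrite sum_if1.
by rewrite sumr_const card_ord mulr_natl.
Qed.

End Prod.
Arguments Sg {R A B} g {n} x.
Section Typ.
Variable R : realType.

Lemma log2_prod (I : finType) (F : I -> R) :
  (forall i, 0 < F i) -> 0 < \prod_i F i /\ log2 (\prod_i F i) = \sum_i log2 (F i).
Proof.
move=> hF.
apply: (big_ind2 (fun x y => 0 < x /\ log2 x = y)).
- by rewrite /log2 ln1 mul0r.
- by move=> x1 x2 y1 y2 [h1 <-] [h2 <-]; split; [rewrite mulr_gt0|rewrite log2M].
- by move=> i _; split.
Qed.

Lemma iid_pos (A B : finType) (p : A * B -> R) n (x : seqn A n * seqn B n) :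
  is_pmf p -> 0 < iid_pair p x -> forall i, 0 < p (x.1 i, x.2 i).
Proof.
move=> [h0 _] hx i; rewrite lt_def h0 andbT.
have /prodf_neq0 h : iid_pair p x != 0 by rewrite gt_eqF.
exact: h.
Qed.

Variables (A B : finType) (p u : A * B -> R).
Hypothesis hp : is_pmf p.
Hypothesis hu : forall l, 0 < p l -> 0 < u l.

Definition Uprod n (x : seqn A n * seqn B n) := \prod_i u (x.1 i, x.2 i).

Definition hrate := \sum_l p l * - log2 (u l).

Definition badset n eta (x : seqn A n * seqn B n) :=
  (0 < iid_pair p x) &&
  ((pw2 (- (n%:R * (hrate - eta))) < Uprod x) ||
   (Uprod x < pw2 (- (n%:R * (hrate + eta))))).

Lemma typ_bad eta theta : 0 < eta -> 0 < theta ->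
  exists N, forall n, (N <= n)%N -> (0 < n)%N ->
  \sum_(x | badset (n:=n) eta x) iid_pair p x <= theta.
Proof.
move=> he ht.
set g := fun l => - log2 (u l).
set V := \sum_l p l * (g l - \sum_l p l * g l) ^+ 2.
have V0 : 0 <= V by apply: sumr_ge0 => l _; rewrite mulr_ge0 ?sqr_ge0 //; case: hp.
exists (Num.truncn (V / (eta ^+ 2 * theta))).+1 => n hn n0.
have nR : 0 < n%:R :> R by rewrite ltr0n.
have hnV : V / (eta ^+ 2 * theta) < n%:R.
  apply: (lt_le_trans (Num.Theory.truncnS_gt _)); by rewrite ler_nat.
have step : forall x, badset (n:=n) eta x ->
   iid_pair p x <= iid_pair p x * ((Sg g x - n%:R * hrate) ^+ 2 / (n%:R * eta) ^+ 2).
  move=> x /andP [px hb].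
  have pi := iid_pos hp px.
  have ui : forall i, 0 < u (x.1 i, x.2 i) by move=> i; apply: hu.
  have [U0 LU] := log2_prod ui.
  have LS : log2 (Uprod x) = - Sg g x.
    by rewrite /Uprod LU /Sg /g sumrN opprK.
  have key : (n%:R * eta) ^+ 2 <= (Sg g x - n%:R * hrate) ^+ 2.
    case/orP: hb => hb.
      have : - (n%:R * (hrate - eta)) < log2 (Uprod x).
        by rewrite -(ltr_log2 (pw2_gt0 _) U0) log2_pw2 in hb.
      rewrite LS => h.
      have h2 : 0 <= n%:R * eta by rewrite mulr_ge0 // ltW.
      nra.
    have : log2 (Uprod x) < - (n%:R * (hrate + eta)).
      by rewrite -(ltr_log2 U0 (pw2_gt0 _)) log2_pw2 in hb.
    rewrite LS => h.
    have h2 : 0 <= n%:R * eta by rewrite mulr_ge0 // ltW.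
    nra.
  rewrite -{1}(mulr1 (iid_pair p x)) ler_wpM2l ?iid_ge0 //.
  by rewrite ler_pdivlMr ?mul1r // exprn_gt0 // mulr_gt0.
apply: (le_trans (ler_sum _ step)).
apply: (le_trans (y := \sum_x iid_pair p x *
     ((Sg g x - n%:R * hrate) ^+ 2 / (n%:R * eta) ^+ 2))).
  apply: sum_le_subset => [//|x _].
  by rewrite mulr_ge0 ?iid_ge0 // divr_ge0 ?sqr_ge0.
have -> : \sum_(x : seqn A n * seqn B n) iid_pair p x * ((Sg g x - n%:R * hrate) ^+ 2 / (n%:R * eta) ^+ 2)
   = (\sum_(x : seqn A n * seqn B n) iid_pair p x * (Sg g x - n%:R * hrate) ^+ 2) / (n%:R * eta) ^+ 2.
  by rewrite mulr_suml; apply: eq_bigr => x _; rewrite mulrA.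
rewrite (_ : hrate = \sum_l p l * g l) // var_sum // -/V.
rewrite ler_pdivrMr ?exprn_gt0 ?mulr_gt0 //.
rewrite ltr_pdivrMr ?mulr_gt0 ?exprn_gt0 // in hnV.
have e2 : 0 < eta ^+ 2 by rewrite exprn_gt0.
rewrite exprMn expr2.
nra.
Qed.

End Typ.
Section Count.
Variable R : realType.

Lemma card_ge_le (I : finType) (W : I -> R) (t : R) :
  (forall i, 0 <= W i) -> \sum_i W i <= 1 -> 0 < t ->
  #|[set i | t <= W i]|%:R * t <= 1.
Proof.
move=> W0 W1 t0; apply: le_trans W1.
rewrite mulr_natl -sumr_const.
apply: (le_trans (y := \sum_(i in [set i | t <= W i]) W i)).
  by apply: ler_sum => i; rewrite inE.
by apply: sum_le_subset.
Qed.

Lemma fiber_sum (I Y : finType) (P : I -> R) (pi : I -> Y) (P2 : Y -> R)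
  (tau : R) (E : {set I}) (M : nat) :
  (forall y, 0 <= P2 y) -> \sum_y P2 y <= 1 -> 0 <= tau ->
  (forall x, x \in E -> P x <= tau * P2 (pi x)) ->
  (forall y, #|[set x in E | pi x == y]| <= M)%N ->
  \sum_(x in E) P x <= M%:R * tau.
Proof.
move=> P20 P21 t0 hP hM.
apply: (le_trans (ler_sum _ hP)).
rewrite (partition_big pi xpredT) //=.
apply: (le_trans (y := \sum_y (tau * P2 y) * M%:R)).
  apply: ler_sum => y _.
  rewrite (eq_bigr (fun=> tau * P2 y)); last by move=> x /andP [_ /eqP ->].
  rewrite sumr_const -[X in X <= _]mulr_natr ler_wpM2l ?mulr_ge0 // ler_nat.
  by apply: leq_trans (hM y); rewrite cardsE.
rewrite -mulr_suml -mulr_sumr mulrC mulrA ler_piMr ?mulr_ge0 //.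
Qed.

Lemma logsum_A (T : finType) (P Q : T -> R) (A : pred T) :
  (forall t, 0 <= P t) -> (forall t, 0 <= Q t) ->
  (forall t, 0 < P t -> 0 < Q t) -> 0 < \sum_(t | A t) P t ->
  (\sum_(t | A t) P t) * log2 ((\sum_(t | A t) P t) / (\sum_(t | A t) Q t))
   <= \sum_(t | A t) P t * log2 (P t / Q t).
Proof.
move=> P0 Q0 PQ.
set a := \sum_(t | A t) P t; set b := \sum_(t | A t) Q t => a0.
have b0 : 0 < b.
  rewrite lt_def sumr_ge0 // andbT; apply/negP => /eqP bz.
  have Qz := psumr_eq0P (fun t _ => Q0 t) bz.
  have Pz : forall t, A t -> P t = 0.
    move=> t At; apply/eqP; rewrite eq_le P0 andbT leNgt; apply/negP => /PQ.
    by rewrite Qz // ltxx.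
  by move: a0; rewrite /a big1 ?ltxx.
have l2 := @ln2_gt0 R.
rewrite -subr_ge0 /a mulr_suml -sumrB.
apply: (le_trans (y := \sum_(t | A t) (P t - Q t * (a / b)) / ln 2)); last first.
  apply: ler_sum => t At.
  have [pt0|pt0] := eqVneq (P t) 0.
    rewrite pt0 !mul0r subrr sub0r mulNr oppr_le0.
    have ab : 0 <= a / b by rewrite divr_ge0 ?(ltW a0) ?(ltW b0).
    by apply: divr_ge0; [apply: mulr_ge0; [exact: Q0 | exact: ab] | exact: ltW l2].
  have pt : 0 < P t by rewrite lt_def pt0 (P0 t).
  have qt := PQ t pt.
  have z0 : 0 < (P t / Q t) / (a / b) by rewrite !divr_gt0.
  rewrite -mulrBr -log2_div ?divr_gt0 //.
  apply: le_trans (ler_wpM2l (ltW pt) (log2_ge z0)).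
  rewrite le_eqVlt; apply/orP; left; apply/eqP.
  by field; rewrite (gt_eqF l2) (gt_eqF b0) (gt_eqF a0) (gt_eqF qt) (gt_eqF pt).
rewrite -mulr_suml sumrB -mulr_suml -/a -/b mulrCA mulfV ?(gt_eqF b0) //.
by rewrite mulr1 subrr mul0r.
Qed.

Lemma sumQ_pos (T : finType) (P Q : T -> R) (A : pred T) :
  (forall t, 0 <= P t) -> (forall t, 0 <= Q t) ->
  (forall t, 0 < P t -> 0 < Q t) -> 0 < \sum_(t | A t) P t ->
  0 < \sum_(t | A t) Q t.
Proof.
move=> P0 Q0 PQ a0.
rewrite lt_def sumr_ge0 // andbT; apply/negP => /eqP bz.
have Qz := psumr_eq0P (fun t _ => Q0 t) bz.
have Pz : forall t, A t -> P t = 0.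
  move=> t At; apply/eqP; rewrite eq_le P0 andbT leNgt; apply/negP => /PQ.
  by rewrite Qz // ltxx.
by move: a0; rewrite big1 ?ltxx.
Qed.

Lemma part_lb (T : finType) (P Q : T -> R) (A : pred T) :
  (forall t, 0 <= P t) -> (forall t, 0 <= Q t) ->
  (forall t, 0 < P t -> 0 < Q t) -> \sum_t Q t <= 1 ->
  - (ln 2)^-1 <= \sum_(t | A t) P t * log2 (P t / Q t).
Proof.
move=> P0 Q0 PQ Q1.
have l2 := @ln2_gt0 R.
have [az|apos] := eqVneq (\sum_(t | A t) P t) 0.
  have Pz := psumr_eq0P (fun t _ => P0 t) az.
  rewrite big1 ?oppr_le0 ?invr_ge0 ?(ltW l2) // => t At.
  by rewrite Pz // mul0r.
have a0 : 0 < \sum_(t | A t) P t by rewrite lt_def apos sumr_ge0.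
have b0 := sumQ_pos P0 Q0 PQ a0.
apply: le_trans (logsum_A P0 Q0 PQ a0).
rewrite log2_div // mulrBr.
have : log2 (\sum_(t | A t) Q t) <= 0.
  rewrite /log2; apply: mulr_le0_ge0; last by rewrite invr_ge0 ltW.
  apply: ln_le0; apply: le_trans Q1.
  by apply: sum_le_subset.
move=> hb.
have := xlog2x_ge a0.
have : 0 <= - ((\sum_(t | A t) P t) * log2 (\sum_(t | A t) Q t)).
  by rewrite oppr_ge0 mulr_ge0_le0 // ltW.
lra.
Qed.

Lemma MI_lb (T : finType) (P Q : T -> R) (A : pred T) :
  (forall t, 0 <= P t) -> (forall t, 0 <= Q t) ->
  (forall t, 0 < P t -> 0 < Q t) -> \sum_t Q t <= 1 ->
  0 < \sum_(t | A t) P t ->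
  - (2 / ln 2) - (\sum_(t | A t) P t) * log2 (\sum_(t | A t) Q t)
   <= \sum_t P t * log2 (P t / Q t).
Proof.
move=> P0 Q0 PQ Q1 a0.
have b0 := sumQ_pos P0 Q0 PQ a0.
rewrite [X in _ <= X](bigID A) /=.
have h1 := part_lb (fun t => ~~ A t) P0 Q0 PQ Q1.
have h2 := logsum_A P0 Q0 PQ a0.
rewrite log2_div // mulrBr in h2.
have h3 := xlog2x_ge a0.
lra.
Qed.

End Count.
Section Sys.
Variable R : realType.
Variables F1 F2 : finType.
Variables pX pK : F1 * F2 -> R.
Hypothesis hX : is_pmf pX.
Hypothesis hK : is_pmf pK.

Lemma inj_correct n (S : system F1 F2 n) k1 k2 (x x' : seqn F1 n * seqn F2 n) :
  correct S x -> correct S x' -> Phi1 S k1 x.1 = Phi1 S k1 x'.1 ->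
  Phi2 S k2 x.2 = Phi2 S k2 x'.2 -> x = x'.
Proof.
move=> /eqP hx /eqP hx' e1 e2.
by rewrite -hx -hx' -(@sys_ok _ _ _ S k1 k2) -(@sys_ok _ _ _ S k1 k2) e1 e2.
Qed.

Definition encf n (S : system F1 F2 n) (k x : seqn F1 n * seqn F2 n) : C1 S * C2 S :=
  (Phi1 S k.1 x.1, Phi2 S k.2 x.2).

Lemma jCX_ge0 n (S : system F1 F2 n) t : 0 <= joint_CX pX pK (S:=S) t.
Proof. by apply: sumr_ge0 => k _; rewrite mulr_ge0 ?iid_ge0. Qed.

Lemma jCX_marg2 n (S : system F1 F2 n) x :
  marg2 (joint_CX pX pK (S:=S)) x = iid_pair pX x.
Proof.
rewrite /marg2 /joint_CX /=.
transitivity (\sum_k iid_pair pK (n:=n) k * iid_pair pX x); last first.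
  by rewrite -mulr_suml iid_sum1 ?mul1r.
rewrite [RHS](partition_big (fun k => encf S k x) xpredT) //=.
Qed.

Lemma jCX_marg1_sum n (S : system F1 F2 n) :
  \sum_c marg1 (joint_CX pX pK (S:=S)) c = 1.
Proof.
rewrite /marg1 exchange_big /=.
under eq_bigr => x _ do rewrite -/(marg2 _ x) jCX_marg2.
exact: iid_sum1.
Qed.

Definition Qprod n (S : system F1 F2 n) (t : (C1 S * C2 S) * (seqn F1 n * seqn F2 n)) :=
  marg1 (joint_CX pX pK (S:=S)) t.1 * marg2 (joint_CX pX pK (S:=S)) t.2.
Arguments Qprod {n} S t.

Lemma Qprod_ge0 n (S : system F1 F2 n) t : 0 <= Qprod S t.
Proof.
by rewrite /Qprod mulr_ge0 // /marg1 /marg2 sumr_ge0 // => i _; apply: jCX_ge0.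
Qed.

Lemma Qprod_pos n (S : system F1 F2 n) t :
  0 < joint_CX pX pK (S:=S) t -> 0 < Qprod S t.
Proof.
move=> h; rewrite /Qprod; case: t h => c x h.
have h1 : joint_CX pX pK (S:=S) (c, x) <= marg1 (joint_CX pX pK (S:=S)) c.
  rewrite /marg1 (bigD1 x) //= lerDl sumr_ge0 // => i _; exact: jCX_ge0.
have h2 : joint_CX pX pK (S:=S) (c, x) <= marg2 (joint_CX pX pK (S:=S)) x.
  rewrite /marg2 (bigD1 c) //= lerDl sumr_ge0 // => i _; exact: jCX_ge0.
by rewrite mulr_gt0 // (lt_le_trans h).
Qed.

Lemma Qprod_sum n (S : system F1 F2 n) : \sum_t Qprod S t <= 1.
Proof.
rewrite /Qprod -(pair_bigA _ (fun c x => marg1 (joint_CX pX pK (S:=S)) c *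
   marg2 (joint_CX pX pK (S:=S)) x)) /=.
under eq_bigr => c _ do rewrite -mulr_sumr.
rewrite -mulr_suml jCX_marg1_sum mul1r.
under eq_bigr => x _ do rewrite jCX_marg2.
by rewrite iid_sum1.
Qed.

Lemma leak_lb n (S : system F1 F2 n) (G KT : pred (seqn F1 n * seqn F2 n))
  (Mt : seqn F1 n * seqn F2 n -> seqn F1 n * seqn F2 n -> C1 S * C2 S -> bool)
  (beta : R) :
  (forall k x, Mt k x (encf S k x)) ->
  (forall c, \sum_(x | G x && [exists k, KT k && Mt k x c]) iid_pair pX x <= beta) ->
  0 < beta -> beta <= 1 ->
  0 < (\sum_(x | G x) iid_pair pX x) * (\sum_(k | KT k) iid_pair pK k) ->
  - (2 / ln 2) - (\sum_(x | G x) iid_pair pX x) * (\sum_(k | KT k) iid_pair pK k)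
     * log2 beta <= leakage pX pK S.
Proof.
move=> hM hc b0 b1 al0.
set al := (\sum_(x | G x) iid_pair pX x) * (\sum_(k | KT k) iid_pair pK k).
set P := joint_CX pX pK (S:=S).
pose A := fun t : (C1 S * C2 S) * (seqn F1 n * seqn F2 n) =>
   G t.2 && [exists k, KT k && Mt k t.2 t.1].
have P0 : forall t, 0 <= P t := @jCX_ge0 n S.
have ha : al <= \sum_(t | A t) P t.
  apply: (le_trans (y := \sum_(t : (C1 S * C2 S) * (seqn F1 n * seqn F2 n))
     \sum_(k | encf S k t.2 == t.1)
        (if G t.2 && KT k then iid_pair pK k * iid_pair pX t.2 else 0))).
    rewrite -(pair_bigA _ (fun c x => \sum_(k | encf S k x == c)
        (if G x && KT k then iid_pair pK k * iid_pair pX x else 0))) /=.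
    rewrite exchange_big /=.
    have E : forall x, \sum_c \sum_(k | encf S k x == c)
        (if G x && KT k then iid_pair pK k * iid_pair pX x else 0) =
        \sum_k (if G x && KT k then iid_pair pK k * iid_pair pX x else 0).
      move=> x; rewrite [RHS](partition_big (fun k => encf S k x) xpredT) //=.
    under [X in _ <= X]eq_bigr => x _ do rewrite E.
    rewrite /al mulr_suml [X in X <= _]big_mkcond /=.
    apply: ler_sum => x _.
    case: (G x) => /=; last by rewrite big1.
    rewrite mulr_sumr [X in X <= _]big_mkcond /=.
    apply: ler_sum => k _; case: (KT k) => //=.
    by rewrite mulrC.
  rewrite [X in _ <= X]big_mkcond /=.
  apply: ler_sum => t _; case: ifP => At.
    rewrite /P /joint_CX; apply: ler_sum => k _.
    case: ifP => // _; exact: mulr_ge0 (iid_ge0 _ hK) (iid_ge0 _ hX).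
  rewrite big1 // => k /eqP ek; case: ifP => // /andP [gx kk].
  move: At; rewrite /A gx /=; move/negbT/existsPn => /(_ k).
  by rewrite kk /= -ek hM.
have apos : 0 < \sum_(t | A t) P t by apply: lt_le_trans ha.
have hb : \sum_(t | A t) Qprod S t <= beta.
  rewrite /Qprod.
  rewrite (eq_bigl (fun t => xpredT t.1 && A (t.1, t.2))); last by case.
  rewrite -(pair_big_dep xpredT (fun c x => A (c, x))
     (fun c x => marg1 P c * marg2 P x)) /=.
  apply: (le_trans (y := \sum_c marg1 P c * beta)).
    apply: ler_sum => c _; rewrite -mulr_sumr ler_wpM2l //.
      by rewrite /marg1 sumr_ge0.
    under eq_bigr => x _ do rewrite jCX_marg2.
    exact: hc.
  by rewrite -mulr_suml jCX_marg1_sum mul1r.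
have MI := MI_lb P0 (@Qprod_ge0 n S) (@Qprod_pos n S) (@Qprod_sum n S) apos.
have bp := sumQ_pos P0 (@Qprod_ge0 n S) (@Qprod_pos n S) apos.
have lb : log2 (\sum_(t | A t) Qprod S t) <= log2 beta by rewrite ler_log2.
have lb0 : log2 beta <= 0.
  rewrite /log2; apply: mulr_le0_ge0; last by rewrite invr_ge0 ltW // ln2_gt0.
  exact: ln_le0.
have e1 : 0 <= (\sum_(t | A t) P t - al) * (- log2 beta).
  by rewrite mulr_ge0 // ?subr_ge0 // oppr_ge0.
have e2 : 0 <= (\sum_(t | A t) P t) * (log2 beta - log2 (\sum_(t | A t) Qprod S t)).
  by rewrite mulr_ge0 // ?subr_ge0 // ltW.
rewrite /leakage /mutual_info.
apply: le_trans MI.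
nra.
Qed.

End Sys.
Section Ent.
Variable R : realType.
Variables (A B : finType) (p : A * B -> R).
Hypothesis hp : is_pmf p.

Lemma p_ge0 l : 0 <= p l. Proof. by case: hp. Qed.

Lemma marg1_ge l : p l <= marg1 p l.1.
Proof.
case: l => a b; rewrite /marg1 (bigD1 b) //= lerDl sumr_ge0 // => i _; exact: p_ge0.
Qed.

Lemma marg2_ge l : p l <= marg2 p l.2.
Proof.
case: l => a b; rewrite /marg2 (bigD1 a) //= lerDl sumr_ge0 // => i _; exact: p_ge0.
Qed.

Lemma marg1_ge0 a : 0 <= marg1 p a.
Proof. by rewrite sumr_ge0 // => i _; exact: p_ge0. Qed.
Lemma marg2_ge0 b : 0 <= marg2 p b.
Proof. by rewrite sumr_ge0 // => i _; exact: p_ge0. Qed.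

Lemma marg1_sum : \sum_a marg1 p a = 1.
Proof.
rewrite /marg1 (pair_bigA _ (fun a b => p (a, b))) /=.
by case: hp => _ <-; apply: eq_bigr => -[].
Qed.

Lemma marg2_sum : \sum_b marg2 p b = 1.
Proof.
rewrite /marg2 exchange_big (pair_bigA _ (fun a b => p (a, b))) /=.
by case: hp => _ <-; apply: eq_bigr => -[].
Qed.

Lemma hrate_joint : hrate p p = H12 p.
Proof. by rewrite /hrate /H12 /entropy -sumrN; apply: eq_bigr => l _; rewrite mulrN. Qed.

Lemma hrate_m1 : hrate p (fun l => marg1 p l.1) = H1 p.
Proof.
rewrite /hrate /H1 /entropy -sumrN.
rewrite (eq_bigr (fun l => p (l.1, l.2) * - log2 (marg1 p l.1))); last by case.
rewrite -(pair_bigA _ (fun a b => p (a, b) * - log2 (marg1 p a))) /=.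
by apply: eq_bigr => a _; rewrite -mulr_suml mulrN.
Qed.

Lemma hrate_m2 : hrate p (fun l => marg2 p l.2) = H2 p.
Proof.
rewrite /hrate /H2 /entropy -sumrN.
rewrite (eq_bigr (fun l => p (l.1, l.2) * - log2 (marg2 p l.2))); last by case.
rewrite -(pair_bigA _ (fun a b => p (a, b) * - log2 (marg2 p b))) /= exchange_big /=.
by apply: eq_bigr => b _; rewrite -mulr_suml mulrN.
Qed.

Lemma hrate_c1 : hrate p (fun l => p l / marg2 p l.2) = H1given2 p.
Proof.
rewrite /H1given2 -hrate_joint -hrate_m2 /hrate -sumrB.
apply: eq_bigr => l _.
have [->|pl] := eqVneq (p l) 0; first by rewrite !mul0r subrr.
have pl0 : 0 < p l by rewrite lt_def pl p_ge0.
have ml0 : 0 < marg2 p l.2 := lt_le_trans pl0 (marg2_ge l).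
by rewrite log2_div //; ring.
Qed.

Lemma hrate_c2 : hrate p (fun l => p l / marg1 p l.1) = H2given1 p.
Proof.
rewrite /H2given1 -hrate_joint -hrate_m1 /hrate -sumrB.
apply: eq_bigr => l _.
have [->|pl] := eqVneq (p l) 0; first by rewrite !mul0r subrr.
have pl0 : 0 < p l by rewrite lt_def pl p_ge0.
have ml0 : 0 < marg1 p l.1 := lt_le_trans pl0 (marg1_ge l).
by rewrite log2_div //; ring.
Qed.

Lemma fac_letter2 l : p l = (p l / marg2 p l.2) * marg2 p l.2.
Proof.
have [m0|m0] := eqVneq (marg2 p l.2) 0.
  have : p l <= 0 by rewrite -m0 marg2_ge.
  move=> h; have -> : p l = 0 by apply/eqP; rewrite eq_le h p_ge0.
  by rewrite !mul0r.
by rewrite divfK.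
Qed.

Lemma fac_letter1 l : p l = (p l / marg1 p l.1) * marg1 p l.1.
Proof.
have [m0|m0] := eqVneq (marg1 p l.1) 0.
  have : p l <= 0 by rewrite -m0 marg1_ge.
  move=> h; have -> : p l = 0 by apply/eqP; rewrite eq_le h p_ge0.
  by rewrite !mul0r.
by rewrite divfK.
Qed.

Lemma pos_c1 l : 0 < p l -> 0 < p l / marg2 p l.2.
Proof. by move=> h; rewrite divr_gt0 // (lt_le_trans h) // marg2_ge. Qed.
Lemma pos_c2 l : 0 < p l -> 0 < p l / marg1 p l.1.
Proof. by move=> h; rewrite divr_gt0 // (lt_le_trans h) // marg1_ge. Qed.
Lemma pos_m1 l : 0 < p l -> 0 < marg1 p l.1.
Proof. by move=> h; rewrite (lt_le_trans h) // marg1_ge. Qed.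
Lemma pos_m2 l : 0 < p l -> 0 < marg2 p l.2.
Proof. by move=> h; rewrite (lt_le_trans h) // marg2_ge. Qed.

Lemma fac_c1 n (x : seqn A n * seqn B n) :
  iid_pair p x = Uprod (fun l => p l / marg2 p l.2) x * \prod_i marg2 p (x.2 i).
Proof.
rewrite /iid_pair /Uprod -big_split /=.
by apply: eq_bigr => i _; rewrite -fac_letter2.
Qed.

Lemma fac_c2 n (x : seqn A n * seqn B n) :
  iid_pair p x = Uprod (fun l => p l / marg1 p l.1) x * \prod_i marg1 p (x.1 i).
Proof.
rewrite /iid_pair /Uprod -big_split /=.
by apply: eq_bigr => i _; rewrite -fac_letter1.
Qed.

Lemma sum_m1 n : \sum_(s : seqn A n) \prod_i marg1 p (s i) = 1.
Proof.
by rewrite (sum_ffun_prod (fun i => marg1 p)) marg1_sum prodr_const expr1n.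
Qed.

Lemma sum_m2 n : \sum_(s : seqn B n) \prod_i marg2 p (s i) = 1.
Proof.
by rewrite (sum_ffun_prod (fun i => marg2 p)) marg2_sum prodr_const expr1n.
Qed.

End Ent.

Section Comb.
Variable R : realType.

Lemma sum_le_subset_pos (I : finType) (P Q : pred I) (F : I -> R) :
  (forall i, 0 <= F i) -> (forall i, P i -> 0 < F i -> Q i) ->
  \sum_(i | P i) F i <= \sum_(i | Q i) F i.
Proof.
move=> F0 PQ; rewrite (bigID (fun i => 0 < F i)) /=.
rewrite [X in _ + X]big1; last first.
  move=> i /andP [_ h]; apply/eqP; rewrite eq_le F0 andbT.
  by rewrite leNgt.
rewrite addr0; apply: sum_le_subset => // i /andP [].
exact: PQ.
Qed.

Lemma fiber_card (O Y K : finType) (E : {set O}) (pi : O -> Y) (KTs : {set K})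
  (r : K -> O -> bool) :
  (forall x, x \in E -> exists2 kp, kp \in KTs & r kp x) ->
  (forall kp x x', x \in E -> x' \in E -> pi x = pi x' -> r kp x -> r kp x' -> x = x') ->
  forall y, (#|[set x in E | pi x == y]| <= #|KTs|)%N.
Proof.
move=> hE hinj y.
case: (set_0Vmem [set x in E | pi x == y]) => [->|[x0 _]]; first by rewrite cards0.
pose h kp := odflt x0 [pick z in [set z in E | pi z == y] | r kp z].
apply: (leq_trans _ (leq_imset_card h KTs)).
apply: subset_leq_card; apply/fintype.subsetP => x.
rewrite inE => /andP [xE /eqP px].
have [kp kin rx] := hE x xE.
apply/imsetP; exists kp => //.
rewrite /h; case: pickP => /= [x' |none].
  move=> /andP [x'in rx'].
  rewrite inE in x'in; case/andP: x'in => x'E px'.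
  apply: (hinj kp x x' xE x'E _ rx rx').
  by rewrite px (eqP px').
by move: (none x); rewrite inE xE px eqxx rx.
Qed.

Lemma fiber_card_map (O Y Z : finType) (E : {set O}) (pi : O -> Y) (f : O -> Z) :
  (forall x x', x \in E -> x' \in E -> pi x = pi x' -> f x = f x' -> x = x') ->
  forall y, (#|[set x in E | pi x == y]| <= #|Z|)%N.
Proof.
move=> hinj y.
rewrite -(card_in_imset (f := f)); first exact: max_card.
move=> x x'; rewrite !inE => /andP [xE /eqP px] /andP [x'E /eqP px'] e.
by apply: hinj => //; rewrite px px'.
Qed.

End Comb.
Section Asym.
Variable R : realType.

Lemma pw2D (a b : R) : pw2 a * pw2 b = pw2 (a + b).
Proof. by rewrite /pw2 -expRD mulrDl. Qed.

Lemma pw2N (a : R) : (pw2 a)^-1 = pw2 (- a).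
Proof.
by rewrite /pw2 mulNr expRN.
Qed.

Lemma typX (A B : finType) (p u : A * B -> R) eta theta :
  is_pmf p -> (forall l, 0 < p l -> 0 < u l) -> 0 < eta -> 0 < theta ->
  exists N, forall n, (N <= n)%N -> (0 < n)%N ->
  \sum_(x : seqn A n * seqn B n | ~~ (Uprod u x <= pw2 (- (n%:R * (hrate p u - eta)))))
     iid_pair p x <= theta.
Proof.
move=> hp hu he ht; have [N HN] := typ_bad hp hu he ht.
exists N => n hn n0; apply: le_trans (HN n hn n0).
apply: sum_le_subset_pos => [x|x]; first exact: iid_ge0.
by rewrite -ltNge /badset => h1 h2; rewrite h2 h1.
Qed.

Lemma typK (A B : finType) (p u : A * B -> R) eta theta :
  is_pmf p -> (forall l, 0 < p l -> 0 < u l) -> 0 < eta -> 0 < theta ->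
  exists N, forall n, (N <= n)%N -> (0 < n)%N ->
  \sum_(x : seqn A n * seqn B n | ~~ (pw2 (- (n%:R * (hrate p u + eta))) <= Uprod u x))
     iid_pair p x <= theta.
Proof.
move=> hp hu he ht; have [N HN] := typ_bad hp hu he ht.
exists N => n hn n0; apply: le_trans (HN n hn n0).
apply: sum_le_subset_pos => [x|x]; first exact: iid_ge0.
by rewrite -ltNge /badset => h1 h2; rewrite h2 h1 orbT.
Qed.

Lemma big_n (X : R) (N : nat) : exists n, (N <= n)%N /\ (0 < n)%N /\ X < n%:R.
Proof.
exists (maxn N (Num.truncn X).+1); split; first exact: leq_maxl.
split; first by rewrite leq_max orbT.
apply: (lt_le_trans (Num.Theory.truncnS_gt X)).
by rewrite ler_nat leq_maxr.
Qed.

Lemma asym_rate (h r c0 : R) : 0 < c0 ->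
  (forall eta, 0 < eta -> exists N, forall n, (N <= n)%N -> (0 < n)%N ->
      log2 c0 <= n%:R * (r + 3%:R * eta - h)) -> h <= r.
Proof.
move=> c0p H; rewrite leNgt; apply/negP => hr.
have d0 : 0 < (h - r) / 6%:R by rewrite divr_gt0 // subr_gt0.
have [N HN] := H _ d0.
have [n [hn [n0 hX]]] := big_n (- log2 c0 * 2%:R / (h - r)) N.
have := HN n hn n0.
have dp : 0 < h - r by rewrite subr_gt0.
rewrite ltr_pdivrMr // in hX.
have e : r + 3%:R * ((h - r) / 6%:R) - h = - ((h - r) / 2%:R) by field.
rewrite e => hh.
have e2 : n%:R * - ((h - r) / 2%:R) = - (n%:R * (h - r)) / 2%:R by field.
rewrite e2 in hh.
lra.
Qed.

Lemma asym_key (hX hK c1 c2 d : R) : 0 < c1 ->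
  (forall eta, 0 < eta -> 2%:R * eta < hX - hK -> exists N, forall n, (N <= n)%N -> (0 < n)%N ->
      c1 * (n%:R * (hX - hK - 2%:R * eta)) - c2 <= d) -> hX <= hK.
Proof.
move=> c1p H; rewrite leNgt; apply/negP => hr.
have dp : 0 < hX - hK by rewrite subr_gt0.
have d0 : 0 < (hX - hK) / 4%:R by rewrite divr_gt0.
have d1 : 2%:R * ((hX - hK) / 4%:R) < hX - hK.
  lra.
have [N HN] := H _ d0 d1.
have [n [hn [n0 hX0]]] := big_n ((d + c2) * 2%:R / (c1 * (hX - hK))) N.
have := HN n hn n0.
have e : hX - hK - 2%:R * ((hX - hK) / 4%:R) = (hX - hK) / 2%:R by field.
rewrite e => hh.
rewrite ltr_pdivrMr ?mulr_gt0 // in hX0.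
lra.
Qed.

End Asym.
Section Gen.
Variable R : realType.
Variables F1 F2 : finType.
Variables pX pK : F1 * F2 -> R.
Hypothesis hX : is_pmf pX.
Hypothesis hK : is_pmf pK.

Lemma correct_mass n (S : system F1 F2 n) (T : pred (seqn F1 n * seqn F2 n)) (eps theta : R) :
  err_prob pX S <= eps ->
  \sum_(x | ~~ T x) iid_pair pX x <= theta ->
  1 - eps - theta <= \sum_(x | correct S x && T x) iid_pair pX x.
Proof.
move=> he ht.
have h1 := iid_sum1 n hX.
rewrite (bigID (correct S)) /= in h1.
rewrite /err_prob in he.
have h2 : \sum_(x | correct S x) iid_pair pX x =
   \sum_(x | correct S x && T x) iid_pair pX x + \sum_(x | correct S x && ~~ T x) iid_pair pX x.
  exact: bigID.
have h3 : \sum_(x | correct S x && ~~ T x) iid_pair pX x <= \sum_(x | ~~ T x) iid_pair pX x.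
  apply: sum_le_subset => [x /andP [] //|x _]; exact: iid_ge0.
lra.
Qed.

Lemma rate_gen n (S : system F1 F2 n) (Y Z : finType)
  (pi : seqn F1 n * seqn F2 n -> Y) (P2 : Y -> R) (u : F1 * F2 -> R)
  (f : seqn F1 n * seqn F2 n -> Z) (tau eps theta : R) :
  (forall y, 0 <= P2 y) -> \sum_y P2 y <= 1 -> 0 <= tau ->
  (forall x, iid_pair pX x = Uprod u x * P2 (pi x)) ->
  (forall x x', correct S x -> correct S x' -> pi x = pi x' -> f x = f x' -> x = x') ->
  err_prob pX S <= eps ->
  \sum_(x : seqn F1 n * seqn F2 n | ~~ (Uprod u x <= tau)) iid_pair pX x <= theta ->
  1 - eps - theta <= #|Z|%:R * tau.
Proof.
move=> P20 P21 t0 hfac hinj he ht.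
apply: le_trans (correct_mass he ht) _.
pose E := [set x | correct S x && (Uprod u x <= tau)].
rewrite (eq_bigl (fun x => x \in E)); last by move=> x; rewrite inE.
apply: (@fiber_sum _ _ _ _ pi _ _ _ _ P20 P21 t0).
  move=> x; rewrite inE => /andP [_ hu]; rewrite hfac ler_wpM2r //.
apply: (@fiber_card_map _ _ _ E pi f) => x y.
rewrite !inE => /andP [cx _] /andP [cy _]; exact: hinj.
Qed.

Lemma key_gen n (S : system F1 F2 n) (Y Kp : finType)
  (pi : seqn F1 n * seqn F2 n -> Y) (P2 : Y -> R) (uX : F1 * F2 -> R)
  (kap : seqn F1 n * seqn F2 n -> Kp) (W : Kp -> R) (uK : F1 * F2 -> R)
  (r : Kp -> seqn F1 n * seqn F2 n -> C1 S * C2 S -> bool)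
  (tau t eps theta : R) :
  (forall y, 0 <= P2 y) -> \sum_y P2 y <= 1 -> 0 < tau -> 0 < t ->
  (forall x, iid_pair pX x = Uprod uX x * P2 (pi x)) ->
  (forall kp, 0 <= W kp) -> \sum_kp W kp <= 1 ->
  (forall k, Uprod uK k = W (kap k)) ->
  (forall k x, r (kap k) x (encf S k x)) ->
  (forall kp c x x', correct S x -> correct S x' -> pi x = pi x' ->
      r kp x c -> r kp x' c -> x = x') ->
  err_prob pX S <= eps ->
  \sum_(x : seqn F1 n * seqn F2 n | ~~ (Uprod uX x <= tau)) iid_pair pX x <= theta ->
  \sum_(k : seqn F1 n * seqn F2 n | ~~ (t <= Uprod uK k)) iid_pair pK k <= theta ->
  0 < 1 - eps - theta -> 0 < 1 - theta -> tau / t <= 1 ->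
  - (2 / ln 2) - (1 - eps - theta) * (1 - theta) * log2 (tau / t)
    <= leakage pX pK S.
Proof.
move=> P20 P21 tau0 t0 hfac W0 W1 hUK hr hinj he htX htK a0 b0 beta1.
pose TKs := [set kp | t <= W kp].
pose G := fun x => correct S x && (Uprod uX x <= tau).
pose KT := fun k => kap k \in TKs.
pose Mt := fun k x c => r (kap k) x c.
have hc : forall c, \sum_(x | G x && [exists k, KT k && Mt k x c]) iid_pair pX x <= tau / t.
  move=> c.
  pose E := [set x | G x && [exists k, KT k && Mt k x c]].
  rewrite (eq_bigl (fun x => x \in E)); last by move=> x; rewrite inE.
  apply: (le_trans (y := #|TKs|%:R * tau)).
    apply: (@fiber_sum _ _ _ _ pi _ _ _ _ P20 P21 (ltW tau0)).
      move=> x; rewrite inE => /andP [/andP [_ hu] _]; rewrite hfac ler_wpM2r //.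
    apply: (@fiber_card _ _ _ _ pi TKs (fun kp x => r kp x c)).
      move=> x; rewrite inE => /andP [_ /existsP [k /andP [kk mk]]].
      by exists (kap k).
    move=> kp x x'; rewrite !inE => /andP [/andP [cx _] _] /andP [/andP [cx' _] _].
    exact: hinj.
  have hcard := card_ge_le W0 W1 t0.
  rewrite -/TKs in hcard.
  rewrite ler_pdivlMr // mulrAC.
  by have := ler_wpM2r (ltW tau0) hcard; rewrite mul1r.
have al1 : 1 - eps - theta <= \sum_(x | G x) iid_pair pX x by exact: correct_mass.
have al2 : 1 - theta <= \sum_(k | KT k) iid_pair pK k.
  have h1 := iid_sum1 n hK.
  rewrite (bigID KT) /= in h1.
  have : \sum_(k | ~~ KT k) iid_pair pK k <= theta.
    apply: le_trans htK; apply: sum_le_subset => [k|k _]; last exact: iid_ge0.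
    by rewrite /KT inE hUK.
  lra.
have beta0 : 0 < tau / t by rewrite divr_gt0.
have alpos : 0 < (\sum_(x | G x) iid_pair pX x) * (\sum_(k | KT k) iid_pair pK k).
  by rewrite mulr_gt0 // (lt_le_trans _ al1, lt_le_trans _ al2).
have L := leak_lb hX hK (Mt := Mt) hr hc beta0 beta1 alpos.
apply: le_trans L.
have lb0 : log2 (tau / t) <= 0.
  rewrite /log2; apply: mulr_le0_ge0; last by rewrite invr_ge0 ltW // ln2_gt0.
  exact: ln_le0.
set a := \sum_(x | G x) iid_pair pX x.
set b := \sum_(k | KT k) iid_pair pK k.
set L2 := log2 (tau / t).
have s1 : 0 <= a - (1 - eps - theta) by rewrite subr_ge0.
have s2 : 0 <= b - (1 - theta) by rewrite subr_ge0.
have bpos : 0 <= b by apply: ltW; apply: lt_le_trans al2.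
have nl : 0 <= - L2 by rewrite oppr_ge0.
have e1 := mulr_ge0 (mulr_ge0 s1 bpos) nl.
have e2 := mulr_ge0 (mulr_ge0 (ltW a0) s2) nl.
nra.
Qed.

End Gen.
Section AsymGen.
Variable R : realType.
Variables F1 F2 : finType.
Variables pX pK : F1 * F2 -> R.
Hypothesis hX : is_pmf pX.
Hypothesis hK : is_pmf pK.
Variable sys : forall n : nat, system F1 F2 n.

Lemma rate_fin (c0 Mr tau nr r h eta : R) :
  0 < c0 -> 0 < tau -> c0 <= Mr * tau -> log2 tau = - (nr * (h - eta)) ->
  log2 Mr <= nr * (r + 2%:R * eta) -> log2 c0 <= nr * (r + 3%:R * eta - h).
Proof.
move=> c0p t0 hc lt lm.
have Mp : 0 < Mr.
  have : 0 < Mr * tau by apply: lt_le_trans hc.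
  by rewrite pmulr_lgt0.
have : log2 c0 <= log2 (Mr * tau) by rewrite ler_log2 // mulr_gt0.
rewrite log2M // lt.
lra.
Qed.

Lemma rate_asym (u : F1 * F2 -> R) (Y Z : nat -> finType)
  (pi : forall n, seqn F1 n * seqn F2 n -> Y n) (P2 : forall n, Y n -> R)
  (f : forall n, seqn F1 n * seqn F2 n -> Z n) (r eps : R) :
  0 < eps < 1 -> (forall l, 0 < pX l -> 0 < u l) ->
  (forall n y, 0 <= P2 n y) -> (forall n, \sum_y P2 n y <= 1) ->
  (forall n x, iid_pair pX x = Uprod u x * P2 n (pi n x)) ->
  (forall n x x', correct (sys n) x -> correct (sys n) x' -> pi n x = pi n x' ->
      f n x = f n x' -> x = x') ->
  (forall eta, 0 < eta -> exists n0, forall n, (n0 <= n)%N -> (0 < n)%N ->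
      err_prob pX (sys n) <= eps /\ log2 (#|Z n|%:R) <= n%:R * (r + 2%:R * eta)) ->
  hrate pX u <= r.
Proof.
move=> /andP [e0 e1] hu P20 P21 hfac hinj H.
have c0 : 0 < (1 - eps) / 2%:R by rewrite divr_gt0 // subr_gt0.
apply: (asym_rate c0) => eta he.
have [N1 HN1] := typX hX hu he c0.
have [n0 Hn0] := H eta he.
exists (maxn N1 n0) => n hn n0p.
have [err rt] := Hn0 n (leq_trans (leq_maxr _ _) hn) n0p.
have ht := HN1 n (leq_trans (leq_maxl _ _) hn) n0p.
set tau := pw2 (- (n%:R * (hrate pX u - eta))).
have := rate_gen hX (P20 n) (P21 n) (ltW (pw2_gt0 _)) (hfac n) (@hinj n) err ht.
move=> hm.
apply: (rate_fin c0 (pw2_gt0 _) _ (log2_pw2 _) rt).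
by rewrite (_ : (1 - eps) / 2%:R = 1 - eps - (1 - eps) / 2%:R); last by field.
Qed.

Lemma key_asym (uX uK : F1 * F2 -> R) (Y Kp : nat -> finType)
  (pi : forall n, seqn F1 n * seqn F2 n -> Y n) (P2 : forall n, Y n -> R)
  (kap : forall n, seqn F1 n * seqn F2 n -> Kp n) (W : forall n, Kp n -> R)
  (rr : forall n, Kp n -> seqn F1 n * seqn F2 n -> C1 (sys n) * C2 (sys n) -> bool)
  (eps d : R) :
  0 < eps < 1 -> (forall l, 0 < pX l -> 0 < uX l) -> (forall l, 0 < pK l -> 0 < uK l) ->
  (forall n y, 0 <= P2 n y) -> (forall n, \sum_y P2 n y <= 1) ->
  (forall n x, iid_pair pX x = Uprod uX x * P2 n (pi n x)) ->
  (forall n kp, 0 <= W n kp) -> (forall n, \sum_kp W n kp <= 1) ->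
  (forall n k, Uprod uK k = W n (kap n k)) ->
  (forall n k x, rr n (kap n k) x (encf (sys n) k x)) ->
  (forall n kp c x x', correct (sys n) x -> correct (sys n) x' -> pi n x = pi n x' ->
      rr n kp x c -> rr n kp x' c -> x = x') ->
  (exists n0, forall n, (n0 <= n)%N -> (0 < n)%N ->
      err_prob pX (sys n) <= eps /\ leakage pX pK (sys n) <= d) ->
  hrate pX uX <= hrate pK uK.
Proof.
move=> /andP [e0 e1] huX huK P20 P21 hfac W0 W1 hUK hr hinj [n0 Hn0].
set th := (1 - eps) / 4%:R.
have th0 : 0 < th by rewrite divr_gt0 // subr_gt0.
have a0 : 0 < 1 - eps - th by rewrite /th; lra.
have b0 : 0 < 1 - th by rewrite /th; lra.
apply: (asym_key (c1 := (1 - eps - th) * (1 - th)) (c2 := 2 / ln 2) (d := d)).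
  exact: mulr_gt0.
move=> eta he hlt.
have [N1 HN1] := typX hX huX he th0.
have [N2 HN2] := typK hK huK he th0.
exists (maxn (maxn N1 N2) n0) => n hn np.
have [err lk] := Hn0 n (leq_trans (leq_maxr _ _) hn) np.
have hn' := leq_trans (leq_maxl _ _) hn.
have htX := HN1 n (leq_trans (leq_maxl _ _) hn') np.
have htK := HN2 n (leq_trans (leq_maxr _ _) hn') np.
set tau := pw2 (- (n%:R * (hrate pX uX - eta))).
set t := pw2 (- (n%:R * (hrate pK uK + eta))).
have eL : log2 (tau / t) = - (n%:R * (hrate pX uX - hrate pK uK - 2%:R * eta)).
  rewrite log2_div ?pw2_gt0 // /tau /t !log2_pw2; ring.
have nR : 0 <= n%:R :> R by [].
have b1 : tau / t <= 1.
  rewrite -(pw2_log2 (divr_gt0 (pw2_gt0 _) (pw2_gt0 _))) -/tau -/t eL.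
  rewrite /pw2 expR_le1 mulNr oppr_le0.
  have l2 := @ln2_gt0 R.
  apply: mulr_ge0; last exact: ltW.
  apply: mulr_ge0 => //; rewrite subr_ge0; apply: ltW; lra.
have K := key_gen hX hK (P20 n) (P21 n) (pw2_gt0 _) (pw2_gt0 _) (hfac n) (W0 n) (W1 n)
   (hUK n) (hr n) (@hinj n) err htX htK a0 b0 b1.
rewrite eL in K.
lra.
Qed.

End AsymGen.
Section Subadd.
Variable R : realType.
Variables (A B : finType) (p : A * B -> R).
Hypothesis hp : is_pmf p.

Lemma subadd : H12 p <= H1 p + H2 p.
Proof.
have P0 := p_ge0 hp.
pose Q := fun l : A * B => marg1 p l.1 * marg2 p l.2.
have Q0 : forall l, 0 <= Q l by move=> l; rewrite mulr_ge0 // ?marg1_ge0 ?marg2_ge0.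
have PQ : forall l, 0 < p l -> 0 < Q l.
  by move=> l h; rewrite mulr_gt0 // ?pos_m1 ?pos_m2.
have a1 : \sum_(l | xpredT l) p l = 1 by case: hp.
have a0 : 0 < \sum_(l | xpredT l) p l by rewrite a1.
have L := logsum_A P0 Q0 PQ a0.
have b1 : \sum_(l | xpredT l) Q l = 1.
  rewrite /Q -(pair_bigA _ (fun a b => marg1 p a * marg2 p b)) /=.
  under eq_bigr => a _ do rewrite -mulr_sumr.
  by rewrite -mulr_suml marg1_sum // marg2_sum // mul1r.
have l1 : log2 (1 : R) = 0 by rewrite /log2 ln1 mul0r.
rewrite a1 b1 divr1 l1 mulr0 in L.
rewrite -(hrate_joint p) -(hrate_m1 p) -(hrate_m2 p) /hrate.
rewrite -subr_ge0 (_ : _ + _ - _ = \sum_l p l * log2 (p l / Q l)).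
  exact: L.
rewrite -big_split -sumrB /=; apply: eq_bigr => l _.
have [->|pl] := eqVneq (p l) 0; first by rewrite !mul0r !addr0 subrr.
have pl0 : 0 < p l by rewrite lt_def pl P0.
rewrite log2_div ?PQ // log2M ?pos_m1 ?pos_m2 //.
ring.
Qed.
End Subadd.

Section Final.
Variable R : realType.
Variables F1 F2 : finType.
Variables (z1 : F1) (z2 : F2).
Variables pX pK : F1 * F2 -> R.
Hypothesis hX : is_pmf pX.
Hypothesis hK : is_pmf pK.

Definition k0 n : seqn F1 n * seqn F2 n := ([ffun _ => z1], [ffun _ => z2]).

Lemma card_C1_pos n (S : system F1 F2 n) : (0 < #|C1 S|)%N.
Proof. by apply/card_gt0P; exists (Phi1 S (k0 n).1 (k0 n).1). Qed.
Lemma card_C2_pos n (S : system F1 F2 n) : (0 < #|C2 S|)%N.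
Proof. by apply/card_gt0P; exists (Phi2 S (k0 n).2 (k0 n).2). Qed.

Lemma main_bounds (eps delta d0 : R) (r : R * R) :
  0 < eps < 1 -> delta <= d0 -> Rstar pX pK eps delta r ->
  [/\ H1given2 pX <= r.1, H2given1 pX <= r.2 & H12 pX <= r.1 + r.2] /\
  [/\ H1given2 pX <= H1 pK, H2given1 pX <= H2 pK & H12 pX <= H12 pK].
Proof.
move=> he hd [sys Hs].
have Hr : forall eta, 0 < eta -> exists n0, forall n, (n0 <= n)%N -> (0 < n)%N ->
   [/\ err_prob pX (sys n) <= eps,
       log2 (#|C1 (sys n)|%:R) <= n%:R * (r.1 + 2%:R * eta),
       log2 (#|C2 (sys n)|%:R) <= n%:R * (r.2 + 2%:R * eta) &
       log2 ((#|C1 (sys n)| * #|C2 (sys n)|)%:R) <= n%:R * (r.1 + r.2 + 2%:R * eta)].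
  move=> eta he0; have [n0 Hn0] := Hs eta he0.
  exists n0 => n hn np; have [h1 h2 h3 h4] := Hn0 n hn np.
  have nR : 0 < n%:R :> R by rewrite ltr0n.
  rewrite ler_pdivrMr // in h1; rewrite ler_pdivrMr // in h2.
  have c1 : 0 < #|C1 (sys n)|%:R :> R by rewrite ltr0n card_C1_pos.
  have c2 : 0 < #|C2 (sys n)|%:R :> R by rewrite ltr0n card_C2_pos.
  split => //.
  - have : n%:R * eta >= 0 by rewrite mulr_ge0 // ltW. lra.
  - have : n%:R * eta >= 0 by rewrite mulr_ge0 // ltW. lra.
  - rewrite natrM log2M //. lra.
have Hk : exists n0, forall n, (n0 <= n)%N -> (0 < n)%N ->
   err_prob pX (sys n) <= eps /\ leakage pX pK (sys n) <= d0.
  have [n0 Hn0] := Hs 1 ltr01.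
  exists n0 => n hn np; have [_ _ h3 h4] := Hn0 n hn np.
  by split => //; apply: le_trans hd.
have R1 : H1given2 pX <= r.1.
  rewrite -(hrate_c1 hX).
  apply: (rate_asym (sys := sys) (Y := fun n => (seqn F2 n : finType))
     (Z := fun n => C1 (sys n)) (pi := fun n x => x.2)
     (P2 := fun n s => \prod_i marg2 pX (s i))
     (f := fun n x => Phi1 (sys n) (k0 n).1 x.1) (eps := eps) hX he (pos_c1 hX)).
  - by move=> n y; apply: prodr_ge0 => i _; apply: marg2_ge0.
  - by move=> n; rewrite sum_m2.
  - by move=> n x; apply: fac_c1.
  - move=> n x x' cx cx' e f; apply: (inj_correct (k2 := (k0 n).2) cx cx' f).
    by rewrite e.
  - move=> eta he0; have [n0 Hn0] := Hr eta he0.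
    by exists n0 => n hn np; have [] := Hn0 n hn np.
have R2 : H2given1 pX <= r.2.
  rewrite -(hrate_c2 hX).
  apply: (rate_asym (sys := sys) (Y := fun n => (seqn F1 n : finType))
     (Z := fun n => C2 (sys n)) (pi := fun n x => x.1)
     (P2 := fun n s => \prod_i marg1 pX (s i))
     (f := fun n x => Phi2 (sys n) (k0 n).2 x.2) (eps := eps) hX he (pos_c2 hX)).
  - by move=> n y; apply: prodr_ge0 => i _; apply: marg1_ge0.
  - by move=> n; rewrite sum_m1.
  - by move=> n x; apply: fac_c2.
  - move=> n x x' cx cx' e f; apply: (inj_correct (k1 := (k0 n).1) cx cx' _ f).
    by rewrite e.
  - move=> eta he0; have [n0 Hn0] := Hr eta he0.
    by exists n0 => n hn np; have [] := Hn0 n hn np.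
have R12 : H12 pX <= r.1 + r.2.
  rewrite -(hrate_joint pX).
  apply: (rate_asym (sys := sys) (Y := fun n => unit)
     (Z := fun n => (C1 (sys n) * C2 (sys n))%type) (pi := fun n x => tt)
     (P2 := fun n s => 1)
     (f := fun n x => encf (sys n) (k0 n) x) (eps := eps) hX he (fun l h => h)).
  - by move=> n y; apply: ler01.
  - by move=> n; rewrite sumr_const card_unit.
  - by move=> n x; rewrite mulr1.
  - move=> n x x' cx cx' _ e; case: e => e1 e2.
    exact: (inj_correct cx cx' e1 e2).
  - move=> eta he0; have [n0 Hn0] := Hr eta he0.
    exists n0 => n hn np; have [h1 _ _ h4] := Hn0 n hn np.
    by rewrite card_prod.
split; first by [].
have K1 : H1given2 pX <= H1 pK.
  rewrite -(hrate_c1 hX) -(hrate_m1 pK).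
  apply: (key_asym (sys := sys) (Y := fun n => (seqn F2 n : finType))
     (Kp := fun n => (seqn F1 n : finType)) (pi := fun n x => x.2)
     (P2 := fun n s => \prod_i marg2 pX (s i)) (kap := fun n k => k.1)
     (W := fun n s => \prod_i marg1 pK (s i))
     (rr := fun n kp x c => Phi1 (sys n) kp x.1 == c.1) (eps := eps) (d := d0)
     hX hK he (pos_c1 hX) (pos_m1 hK)).
  - by move=> n y; apply: prodr_ge0 => i _; apply: marg2_ge0.
  - by move=> n; rewrite sum_m2.
  - by move=> n x; apply: fac_c1.
  - by move=> n kp; apply: prodr_ge0 => i _; apply: marg1_ge0.
  - by move=> n; rewrite sum_m1.
  - by [].
  - by move=> n k x; rewrite /encf /=.
  - move=> n kp c x x' cx cx' e /eqP f /eqP f'.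
    apply: (inj_correct (k1 := kp) (k2 := (k0 n).2) cx cx'); first by rewrite f f'.
    by rewrite e.
  - exact: Hk.
have K2 : H2given1 pX <= H2 pK.
  rewrite -(hrate_c2 hX) -(hrate_m2 pK).
  apply: (key_asym (sys := sys) (Y := fun n => (seqn F1 n : finType))
     (Kp := fun n => (seqn F2 n : finType)) (pi := fun n x => x.1)
     (P2 := fun n s => \prod_i marg1 pX (s i)) (kap := fun n k => k.2)
     (W := fun n s => \prod_i marg2 pK (s i))
     (rr := fun n kp x c => Phi2 (sys n) kp x.2 == c.2) (eps := eps) (d := d0)
     hX hK he (pos_c2 hX) (pos_m2 hK)).
  - by move=> n y; apply: prodr_ge0 => i _; apply: marg1_ge0.
  - by move=> n; rewrite sum_m1.
  - by move=> n x; apply: fac_c2.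
  - by move=> n kp; apply: prodr_ge0 => i _; apply: marg2_ge0.
  - by move=> n; rewrite sum_m2.
  - by [].
  - by move=> n k x; rewrite /encf /=.
  - move=> n kp c x x' cx cx' e /eqP f /eqP f'.
    apply: (inj_correct (k1 := (k0 n).1) (k2 := kp) cx cx'); last by rewrite f f'.
    by rewrite e.
  - exact: Hk.
have K12 : H12 pX <= H12 pK.
  rewrite -(hrate_joint pX) -(hrate_joint pK).
  apply: (key_asym (sys := sys) (Y := fun n => unit)
     (Kp := fun n => (seqn F1 n * seqn F2 n)%type) (pi := fun n x => tt)
     (P2 := fun n s => 1) (kap := fun n k => k)
     (W := fun n k => iid_pair pK k)
     (rr := fun n kp x c => encf (sys n) kp x == c) (eps := eps) (d := d0)
     hX hK he (fun l h => h) (fun l h => h)).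
  - by move=> n y; apply: ler01.
  - by move=> n; rewrite sumr_const card_unit.
  - by move=> n x; rewrite mulr1.
  - by move=> n kp; apply: iid_ge0.
  - by move=> n; rewrite iid_sum1.
  - by [].
  - by move=> n k x.
  - move=> n kp c x x' cx cx' _ /eqP f /eqP f'.
    have := f; rewrite -f' => e; case: e => e1 e2.
    exact: (inj_correct cx cx' e1 e2).
  - exact: Hk.
by split.
Qed.

End Final.
Lemma point_exists (R : realType) (a1 a2 a12 b1 b2 b12 : R) :
  a1 <= b1 -> a2 <= b2 -> a12 <= b12 -> a1 + a2 <= a12 -> b12 <= b1 + b2 ->
  exists x y, [/\ x <= b1, y <= b2 & x + y <= b12] /\ [/\ a1 <= x, a2 <= y & a12 <= x + y].
Proof.
move=> h1 h2 h3 h4 h5.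
have [hx|hx] := leP a1 (a12 - b2).
  have [hy|hy] := leP a2 (a12 - (a12 - b2)).
    by exists (a12 - b2), (a12 - (a12 - b2)); split; split; lra.
  by exists (a12 - b2), a2; split; split; lra.
have [hy|hy] := leP a2 (a12 - a1).
  by exists a1, (a12 - a1); split; split; lra.
by exists a1, a2; split; split; lra.
Qed.

Unset Implicit Arguments.
Local Open Scope classical_set_scope.

Theorem theorem3 (R : realType) (F1 F2 : finFieldType)
  (pX pK : F1 * F2 -> R) (delta0 : R) :
  is_pmf pX -> is_pmf pK -> 0 < delta0 ->
  forall eps delta : R, 0 < eps < 1 -> 0 <= delta <= delta0 ->
  Rstar pX pK eps delta `<=` Rout pX pK.
Proof.
move=> hX hK d0 eps delta he /andP [hd0 hd] r Hr.
have [[r1 r2 r12] [k1 k2 k12]] := main_bounds 0 0 hX hK he hd Hr.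
have sA := subadd hX; have sK := subadd hK.
rewrite /Rout; destruct pselect as [hp|nE].
  by rewrite /Rsw; split.
exfalso; apply: nE.
have := @point_exists R (H1given2 pX) (H2given1 pX) (H12 pX) (H1 pK) (H2 pK) (H12 pK)
  k1 k2 k12.
move: sA sK; rewrite /H1given2 /H2given1 => sA sK.
case.
- lra.
- lra.
move=> x [y [hk hs]].
by exists (x, y); split.
Qed.
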